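(* Let $K$ be a strictly positive definite kernel on $\Omega\subset\mathbb{R}^d$, $\lambda>0$, and $X_n=\{x_1,\dots,x_n\}\subset\Omega$ pairwise distinct. Then $P_n^\lambda(x)\le\sqrt{\lambda}$ for all $x\in X_n$, and $$P_n(x)\le P_n^\lambda(x)\le Q_n^\lambda(x)\quad\text{for all }x\in\Omega\setminus X_n .$$ In particular $\sup_{x\in\Omega}P_n^\lambda(x)\le\sup_{x\in\Omega}Q_n^\lambda(x)$.
   Context: $\mathcal{H}$ is the native space (reproducing kernel Hilbert space) of $K$ on $\Omega$. Let $\delta(x,y)=1$ if $x=y$ and $0$ otherwise, $K_\lambda(x,y):=K(x,y)+\lambda\delta(x,y)$, and $\mathcal{H}_\lambda$ the native space of $K_\lambda$. Let $A=(K(x_i,x_j))_{i,j=1}^n$. For $\mu\ge0$ and $f:\Omega\to\mathbb{R}$, $s_n^\mu(f):=\sum_j\alpha_jK(\cdot,x_j)$ with $(A+\mu I)\alpha=(f(x_i))_{i=1}^n$, and $I_n^\lambda(f):=\sum_j\alpha_jK_\lambda(\cdot,x_j)$ with $(A+\lambda I)\alpha=(f(x_i))_i$ (the interpolant of $f$ in $\mathcal{H}_\lambda$). Power functions: $P_n^\lambda(x):=\sup_{f\in\mathcal{H},f\ne0}|f(x)-s_n^\lambda(f)(x)|/\|f\|_{\mathcal{H}}$, $P_n:=P_n^0$ (power function of interpolation), and $Q_n^\lambda(x):=\sup_{f\in\mathcal{H}_\lambda,f\ne0}|f(x)-I_n^\lambda(f)(x)|/\|f\|_{\mathcal{H}_\lambda}$.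 *)

(* Defs.v *)
From HB Require Import structures.
From mathcomp Require Import all_boot all_order all_algebra.
From mathcomp Require Import classical_sets boolp reals ereal.
Set Implicit Arguments. Unset Strict Implicit. Unset Printing Implicit Defensive.
Import Order.TTheory GRing.Theory Num.Theory.
Local Open Scope classical_set_scope.
Local Open Scope ring_scope.

Section Defs.
Variables (R : realType) (d : nat).
Local Notation T := 'rV[R]_d.

Definition qform (K : T -> T -> R) (m : nat) (y : 'I_m -> T) (a : 'I_m -> R) : R :=
  \sum_(i < m) \sum_(j < m) a i * a j * K (y i) (y j).

Definition spd_kernel (Omega : set T) (K : T -> T -> R) : Prop :=
  (forall x y, Omega x -> Omega y -> K x y = K y x) /\
  (forall (m : nat) (y : 'I_m -> T) (a : 'I_m -> R),
      (forall i, Omega (y i)) -> injective y -> (exists i, a i != 0) ->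
      0 < qform K y a).

Definition Klam (K : T -> T -> R) (lam : R) (x y : T) : R :=
  K x y + (if x == y then lam else 0).

(* Native space norm of f (restricted to Omega), with value +oo when f is not
   in the native space:
   ||f||_K = sup { |sum_i a_i f(y_i)| / sqrt(sum_ij a_i a_j K(y_i,y_j)) }. *)
Definition native_norm (K : T -> T -> R) (Omega : set T) (f : T -> R) : \bar R :=
  ereal_sup [set r : \bar R | exists (m : nat) (y : 'I_m -> T) (a : 'I_m -> R),
    [/\ (forall i, Omega (y i)), 0 < qform K y a &
        r = (`| \sum_(i < m) a i * f (y i) | / Num.sqrt (qform K y a))%:E] ].

Definition in_native (K : T -> T -> R) (Omega : set T) (f : T -> R) : Prop :=
  (native_norm K Omega f < +oo)%E.

Definition gram (K : T -> T -> R) (n : nat) (X : 'I_n -> T) : 'M[R]_n :=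
  \matrix_(i, j) K (X i) (X j).

Definition kinterp (Kev : T -> T -> R) (n : nat) (M : 'M[R]_n) (X : 'I_n -> T)
  (f : T -> R) (y : T) : R :=
  \sum_(j < n) (invmx M *m \col_i f (X i)) j 0 * Kev y (X j).

Definition s_n (K : T -> T -> R) (n : nat) (X : 'I_n -> T) (mu : R)
  (f : T -> R) : T -> R := kinterp K (gram K X + mu%:M) X f.

Definition I_n (K : T -> T -> R) (n : nat) (X : 'I_n -> T) (lam : R)
  (f : T -> R) : T -> R := kinterp (Klam K lam) (gram K X + lam%:M) X f.

Definition power_fun (Kn : T -> T -> R) (Omega : set T)
  (app : (T -> R) -> T -> R) (x : T) : \bar R :=
  ereal_sup [set ((`| f x - app f x | / fine (native_norm Kn Omega f))%:E)
    | f in [set f : T -> R | in_native Kn Omega f /\ exists y, Omega y /\ f y != 0]].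

Definition P_n (K : T -> T -> R) (Omega : set T) (n : nat) (X : 'I_n -> T)
  (lam : R) : T -> \bar R := power_fun K Omega (s_n K X lam).

Definition Q_n (K : T -> T -> R) (Omega : set T) (n : nat) (X : 'I_n -> T)
  (lam : R) : T -> \bar R := power_fun (Klam K lam) Omega (I_n K X lam).

End Defs.

(* Main.v *)
Require Import Defs.
From HB Require Import structures.
From mathcomp Require Import all_boot all_order all_algebra.
From mathcomp Require Import classical_sets boolp reals ereal.
From mathcomp Require Import ring lra.
Set Implicit Arguments. Unset Strict Implicit. Unset Printing Implicit Defensive.
Import Order.TTheory GRing.Theory Num.Theory.
Local Open Scope classical_set_scope.
Local Open Scope ring_scope.

Section S.
Variables (R : realType) (d : nat).
Local Notation T := 'rV[R]_d.

Definition catf (U : Type) m r (y : 'I_m -> U) (z : 'I_r -> U) (i : 'I_(m + r)) : U :=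
  match split i with inl i => y i | inr j => z j end.


Lemma catf_l U m r y z i : @catf U m r y z (lshift r i) = y i.
Proof. by rewrite /catf (unsplitK (inl _ i)). Qed.
Lemma catf_r U m r y z i : @catf U m r y z (rshift m i) = z i.
Proof. by rewrite /catf (unsplitK (inr _ i)). Qed.

Definition cross (k : T -> T -> R) m r (y : 'I_m -> T) (a : 'I_m -> R)
  (z : 'I_r -> T) (b : 'I_r -> R) : R :=
  \sum_(i < m) \sum_(j < r) a i * b j * k (y i) (z j).

Lemma qform_cat k m r (y : 'I_m -> T) a (z : 'I_r -> T) b :
  qform k (catf y z) (catf a b) =
  qform k y a + cross k y a z b + cross k z b y a + qform k z b.
Proof.
rewrite /qform /cross big_split_ord /= -!big_split /= -addrA; congr (_ + _).
  apply: eq_bigr => i _; rewrite big_split_ord /= !catf_l; congr (_ + _);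
  by apply: eq_bigr => j _; rewrite ?catf_l ?catf_r.
rewrite -big_split /=; apply: eq_bigr => i _.
rewrite big_split_ord /= !catf_r; congr (_ + _);
by apply: eq_bigr => j _; rewrite ?catf_l ?catf_r.
Qed.

Lemma qform_merge k m r (p : 'I_m -> 'I_r) (w : 'I_r -> T) a :
  qform k (fun i => w (p i)) a = qform k w (fun l => \sum_(i | p i == l) a i).
Proof.
rewrite /qform (partition_big p xpredT) //=; apply: eq_bigr => l _.
transitivity (\sum_(i | p i == l) a i * \sum_(l' < r) (\sum_(j | p j == l') a j) * k (w l) (w l')).
  apply: eq_bigr => i /eqP ->; rewrite mulr_sumr (partition_big p xpredT) //=.
  apply: eq_bigr => l' _; rewrite mulr_suml mulr_sumr; apply: eq_bigr => j /eqP ->.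
  by rewrite mulrA.
rewrite -mulr_suml mulr_sumr; apply: eq_bigr => l' _.
by rewrite mulrA.
Qed.

Lemma psd_ext (Omega : set T) k :
  (forall r (w : 'I_r -> T) b, injective w -> (forall i, Omega (w i)) -> 0 <= qform k w b) ->
  forall m (y : 'I_m -> T) a, (forall i, Omega (y i)) -> 0 <= qform k y a.
Proof.
move=> H m y a Hy.
set s := undup [seq y i | i <- enum 'I_m].
have Hin i : (index (y i) s < size s)%N by rewrite index_mem mem_undup map_f // mem_enum.
pose p i : 'I_(size s) := Ordinal (Hin i).
pose w (l : 'I_(size s)) := nth 0 s l.
have -> : y = fun i => w (p i).
  by apply: funext => i; rewrite /w /= nth_index // -index_mem Hin.
rewrite qform_merge; apply: H.
  move=> l1 l2 /eqP; rewrite /w nth_uniq ?undup_uniq // => /eqP; exact: val_inj.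
move=> l; have : w l \in s by rewrite /w mem_nth.
by rewrite mem_undup => /mapP [i _ ->]; apply: Hy.
Qed.

Lemma qform0 k m (y : 'I_m -> T) : qform k y (fun _ => 0) = 0.
Proof. by rewrite /qform big1 // => i _; rewrite big1 // => j _; rewrite !mul0r. Qed.

Lemma spd_psd Omega K : spd_kernel Omega K ->
  forall m (y : 'I_m -> T) a, (forall i, Omega (y i)) -> 0 <= qform K y a.
Proof.
move=> [_ HK]; apply: psd_ext => r w b inj Hw.
case: (boolP [exists i, b i != 0]) => [/existsP [i Hi]| /existsPn Hn].
  by apply/ltW/HK => //; exists i.
have -> : b = fun _ => 0 by apply: funext => i; apply/eqP; move: (Hn i); rewrite negbK.
by rewrite qform0.
Qed.

Lemma qform_Klam_inj K lam r (w : 'I_r -> T) b : injective w ->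
  qform (Klam K lam) w b = qform K w b + lam * \sum_i b i ^+ 2.
Proof.
move=> inj; rewrite /qform /Klam mulr_sumr -big_split /=; apply: eq_bigr => i _.
under eq_bigr do rewrite mulrDr.
rewrite big_split /=; congr (_ + _).
rewrite (bigD1 i) //= eqxx big1 ?addr0; first by rewrite expr2; ring.
by move=> j /negbTE; rewrite (inj_eq inj) eq_sym => ->; rewrite mulr0.
Qed.

Lemma Klam_psd Omega K lam : spd_kernel Omega K -> 0 <= lam ->
  forall m (y : 'I_m -> T) a, (forall i, Omega (y i)) -> 0 <= qform (Klam K lam) y a.
Proof.
move=> HK hl; apply: psd_ext => r w b inj Hw.
rewrite qform_Klam_inj //; apply: addr_ge0; first exact: spd_psd HK _ _ _ Hw.
by apply: mulr_ge0 => //; apply: sumr_ge0 => i _; apply: sqr_ge0.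
Qed.

Lemma qformZ k m (y : 'I_m -> T) a s :
  qform k y (fun i => s * a i) = s ^+ 2 * qform k y a.
Proof.
rewrite /qform mulr_sumr; apply: eq_bigr => i _; rewrite mulr_sumr.
by apply: eq_bigr => j _; ring.
Qed.

Lemma crossZ k m r (y : 'I_m -> T) a (z : 'I_r -> T) c s :
  cross k y (fun i => s * a i) z c = s * cross k y a z c.
Proof.
rewrite /cross mulr_sumr; apply: eq_bigr => i _; rewrite mulr_sumr.
by apply: eq_bigr => j _; ring.
Qed.

Lemma cross_sym (Omega : set T) k m r (y : 'I_m -> T) a (z : 'I_r -> T) c :
  (forall x y, Omega x -> Omega y -> k x y = k y x) ->
  (forall i, Omega (y i)) -> (forall i, Omega (z i)) ->
  cross k z c y a = cross k y a z c.
Proof.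
move=> hs hy hz; rewrite /cross exchange_big; apply: eq_bigr => i _.
by apply: eq_bigr => j _; rewrite hs // [c _ * _]mulrC.
Qed.

Lemma cauchy_schwarz (Omega : set T) k m r (y : 'I_m -> T) a (z : 'I_r -> T) c :
  (forall x y, Omega x -> Omega y -> k x y = k y x) ->
  (forall m (y : 'I_m -> T) a, (forall i, Omega (y i)) -> 0 <= qform k y a) ->
  (forall i, Omega (y i)) -> (forall i, Omega (z i)) ->
  0 < qform k y a ->
  cross k y a z c ^+ 2 <= qform k y a * qform k z c.
Proof.
move=> hs hp hy hz qa.
set Qa := qform k y a; set Qc := qform k z c; set B := cross k y a z c.
set t := B / Qa.
have hB : B = t * Qa by rewrite /t divfK // gt_eqF.
have := hp _ (catf y z) (catf (fun i => (- t) * a i) c).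
rewrite qform_cat qformZ crossZ (cross_sym (fun i => - t * a i) c hs hy hz) crossZ -/Qa -/Qc -/B.
have hcat : forall i, Omega (catf y z i).
  by move=> i; rewrite /catf; case: split => j.
move=> /(_ hcat); rewrite hB => h.
move: h qa; rewrite -/Qa; clearbody t Qa Qc; clear hB => h qa.
have h2 : 0 <= Qc - t ^+ 2 * Qa by move: h; rewrite !expr2; lra.
have := mulr_ge0 (ltW qa) h2; rewrite !expr2 => h3; lra.
Qed.

Lemma norm_bound Kn Omega f m (y : 'I_m -> T) a :
  in_native Kn Omega f -> (forall i, Omega (y i)) -> 0 < qform Kn y a ->
  `|\sum_i a i * f (y i)| <= fine (native_norm Kn Omega f) * Num.sqrt (qform Kn y a)
  /\ 0 <= fine (native_norm Kn Omega f).
Proof.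
move=> Hin hy qa.
have hel : ((`|\sum_i a i * f (y i)| / Num.sqrt (qform Kn y a))%:E
    <= native_norm Kn Omega f)%E.
  by apply: ereal_sup_ubound; exists m, y, a; split.
have sq : 0 < Num.sqrt (qform Kn y a) by rewrite sqrtr_gt0.
move: Hin hel; rewrite /in_native; case: (native_norm Kn Omega f) => [r| |] //=.
- move=> _; rewrite lee_fin => h; split; first by rewrite -ler_pdivrMr.
  by apply: le_trans h; apply: divr_ge0 => //; apply: ltW.
Qed.

Lemma ratio_le (L N s : R) : 0 <= s -> (0 < N -> `|L| <= N * s) -> `|L| / N <= s.
Proof.
move=> hs h; have [hN|hp] := leP N 0.
  by apply: le_trans hs; apply: mulr_ge0_le0 => //; rewrite invr_le0.
by rewrite ler_pdivrMr // mulrC; apply: h.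
Qed.

Lemma power_ub Kn Omega app x m (z : 'I_m -> T) c :
  (forall i, Omega (z i)) -> 0 < qform Kn z c ->
  (forall f, f x - app f x = \sum_i c i * f (z i)) ->
  (power_fun Kn Omega app x <= (Num.sqrt (qform Kn z c))%:E)%E.
Proof.
move=> hz qc hl; apply: ge_ereal_sup => _ [f [Hf _] <-].
rewrite lee_fin hl; have [h1 h2] := norm_bound Hf hz qc.
by apply: ratio_le => // _; apply: sqrtr_ge0.
Qed.

Lemma div_sqrt (Q : R) : 0 < Q -> Q / Num.sqrt Q = Num.sqrt Q.
Proof.
move=> hQ; rewrite -{1}(sqr_sqrtr (ltW hQ)) expr2 mulfK //.
by rewrite gt_eqF // sqrtr_gt0.
Qed.

Lemma power_exact Kn Omega app x m (z : 'I_m -> T) c :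
  (forall x y, Omega x -> Omega y -> Kn x y = Kn y x) ->
  (forall m (y : 'I_m -> T) a, (forall i, Omega (y i)) -> 0 <= qform Kn y a) ->
  (forall i, Omega (z i)) -> 0 < qform Kn z c ->
  (forall f, f x - app f x = \sum_i c i * f (z i)) ->
  power_fun Kn Omega app x = (Num.sqrt (qform Kn z c))%:E.
Proof.
move=> hs hp hz qc hl; apply/le_anti; rewrite power_ub //=.
pose g t := \sum_j c j * Kn t (z j).
have gz : \sum_i c i * g (z i) = qform Kn z c.
  by rewrite /g /qform; apply: eq_bigr => i _; rewrite mulr_sumr; apply: eq_bigr => j _; rewrite mulrA.
have sq : 0 < Num.sqrt (qform Kn z c) by rewrite sqrtr_gt0.
have normg : native_norm Kn Omega g = (Num.sqrt (qform Kn z c))%:E.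
  apply/le_anti/andP; split.
    apply: ge_ereal_sup => _ [m' [y [a [hy qa ->]]]].
    rewrite lee_fin ler_pdivrMr ?sqrtr_gt0 //.
    have -> : \sum_i a i * g (y i) = cross Kn y a z c.
      by rewrite /g /cross; apply: eq_bigr => i _; rewrite mulr_sumr; apply: eq_bigr => j _; rewrite mulrA.
    rewrite -sqrtr_sqr -sqrtrM ?(ltW qc) // mulrC.
    by apply: ler_wsqrtr; apply: (cauchy_schwarz c hs hp).
  apply: ereal_sup_ubound; exists m, z, c; split => //.
  by rewrite gz ger0_norm ?(ltW qc) // div_sqrt.
apply: ereal_sup_ubound; exists g.
  split; first by rewrite /in_native normg ltry.
  case: (boolP [exists i, g (z i) != 0]) => [/existsP [i Hi]| /existsPn Hn].
    by exists (z i).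
  move: qc; rewrite -gz big1 ?ltxx // => i _.
  by move: (Hn i); rewrite negbK => /eqP ->; rewrite mulr0.
by rewrite normg /= hl gz ger0_norm ?(ltW qc) // div_sqrt.
Qed.

Lemma qf_row K n (X : 'I_n -> T) (v : 'rV_n) :
  (v *m gram K X *m v^T) 0 0 = qform K X (fun i => v 0 i).
Proof.
rewrite mxE /qform; under eq_bigr do rewrite !mxE mulr_suml.
rewrite [RHS]exchange_big /=; apply: eq_bigr => i _; apply: eq_bigr => j _.
rewrite !mxE; ring.
Qed.

Lemma sc_row n (v : 'rV[R]_n) mu :
  (v *m mu%:M *m v^T) 0 0 = mu * \sum_i v 0 i ^+ 2.
Proof.
rewrite mul_mx_scalar -scalemxAl mxE mxE; congr (_ * _); apply: eq_bigr => i _.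
by rewrite !mxE expr2.
Qed.

Lemma row_nz n (v : 'rV[R]_n) : v != 0 -> exists i, v 0 i != 0.
Proof.
move=> hv; case: (boolP [exists i, v 0 i != 0]) => [/existsP //|/existsPn Hn].
move: hv; have -> : v = 0; last by rewrite eqxx.
by apply/matrixP => a b; rewrite (ord1 a) mxE; move: (Hn b); rewrite negbK => /eqP.
Qed.

Lemma gram_unit Omega K n (X : 'I_n -> T) mu :
  spd_kernel Omega K -> (forall i, Omega (X i)) -> injective X -> 0 <= mu ->
  gram K X + mu%:M \in unitmx.
Proof.
move=> HK hX inj hmu; rewrite unitmxE unitfE; apply/negP => /det0P [v vn0 hv].
have : (v *m (gram K X + mu%:M) *m v^T) 0 0 = 0 by rewrite hv mul0mx mxE.
rewrite mulmxDr mulmxDl mxE qf_row sc_row.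
have [i hi] := row_nz vn0.
have hq : 0 < qform K X (fun i => v 0 i) by apply: HK.2 => //; exists i.
have hs : 0 <= mu * \sum_i v 0 i ^+ 2.
  by apply: mulr_ge0 => //; apply: sumr_ge0 => j _; apply: sqr_ge0.
move=> h; move: hq; rewrite -[X in 0 < X]addr0 -h; lra.
Qed.

Definition uvec (Kev : T -> T -> R) n (M : 'M[R]_n) (X : 'I_n -> T) (y : T) : 'rV_n :=
  (\row_j Kev y (X j)) *m invmx M.

Lemma kinterp_eq Kev n (M : 'M[R]_n) (X : 'I_n -> T) f y :
  kinterp Kev M X f y = \sum_i uvec Kev M X y 0 i * f (X i).
Proof.
rewrite /kinterp /uvec.
under eq_bigr do rewrite mxE mulr_suml.
under [RHS]eq_bigr do rewrite mxE mulr_suml.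
rewrite exchange_big /=; apply: eq_bigr => i _; apply: eq_bigr => j _.
rewrite !mxE; ring.
Qed.

Lemma sn_at_X K n (X : 'I_n -> T) lam f i :
  gram K X + lam%:M \in unitmx ->
  s_n K X lam f (X i) =
  f (X i) - lam * (invmx (gram K X + lam%:M) *m \col_i f (X i)) i 0.
Proof.
move=> hu; rewrite /s_n /kinterp.
set M := gram K X + lam%:M; set F := \col_i f (X i); set al := invmx M *m F.
have hF : M *m al = F by rewrite /al mulKVmx.
have hG : (gram K X *m al) i 0 = F i 0 - lam * al i 0.
  have -> : gram K X = M - lam%:M by rewrite /M addrK.
  by rewrite mulmxBl hF mul_scalar_mx !mxE.
rewrite -[f (X i)](_ : F i 0 = _); last by rewrite mxE.
rewrite -hG mxE; apply: eq_bigr => j _; by rewrite !mxE mulrC.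
Qed.

Lemma alpha_quad K n (X : 'I_n -> T) lam f :
  gram K X + lam%:M \in unitmx ->
  let al := invmx (gram K X + lam%:M) *m \col_i f (X i) in
  \sum_j al j 0 * f (X j) = qform K X (fun j => al j 0) + lam * \sum_j al j 0 ^+ 2.
Proof.
move=> hu al.
have hF : (gram K X + lam%:M) *m al = \col_i f (X i) by rewrite /al mulKVmx.
transitivity ((al^T *m ((gram K X + lam%:M) *m al)) 0 0).
  by rewrite hF mxE; apply: eq_bigr => j _; rewrite !mxE.
rewrite mulmxA mulmxDr mulmxDl mxE.
have := qf_row K X al^T; rewrite trmxK => ->.
have := sc_row al^T lam; rewrite trmxK => ->.
by congr (_ + _ * _); [congr qform; apply: funext => j|apply: eq_bigr => j _]; rewrite !mxE.
Qed.

Lemma part1 Omega K lam n (X : 'I_n -> T) :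
  spd_kernel Omega K -> 0 < lam -> (forall i, Omega (X i)) -> injective X ->
  forall i, (P_n K Omega X lam (X i) <= (Num.sqrt lam)%:E)%E.
Proof.
move=> HK hl hX inj i; have hu := gram_unit HK hX inj (ltW hl).
rewrite /P_n /power_fun; apply: ge_ereal_sup => _ [f [Hf _] <-].
rewrite lee_fin sn_at_X //.
have hq := alpha_quad f hu; move: hq.
set al := invmx _ *m _ => hq.
rewrite opprB addrC subrK.
apply: ratio_le; first exact: sqrtr_ge0.
set N := fine _ => hN.
case: (boolP [exists j, al j 0 != 0]) => [/existsP [j hj]|/existsPn Hn]; last first.
  by move: (Hn i); rewrite negbK => /eqP ->; rewrite mulr0 normr0 mulr_ge0 ?sqrtr_ge0 ?ltW.
have hq0 : 0 < qform K X (fun j => al j 0) by apply: HK.2 => //; exists j.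
have [h1 _] := norm_bound Hf hX hq0.
move: h1; rewrite hq -/N.
set q := qform _ _ _; set S := \sum_j _; set s := Num.sqrt q => h1.
have hS : al i 0 ^+ 2 <= S.
  by rewrite /S (bigD1 i) //= lerDl; apply: sumr_ge0 => k _; apply: sqr_ge0.
have hS0 : 0 <= S by apply: sumr_ge0 => k _; apply: sqr_ge0.
have hs0 : 0 <= s by apply: sqrtr_ge0.
have hqs : q = s ^+ 2 by rewrite sqr_sqrtr // ltW.
have h2 : q + lam * S <= N * s.
  by apply: le_trans h1; apply: ler_norm.
have e1 : lam * S <= N * s - s ^+ 2 by rewrite -hqs; lra.
have e2 : N * s - s ^+ 2 <= N ^+ 2.
  have := sqr_ge0 (N - s); have := mulr_ge0 (ltW hN) hs0; rewrite !expr2; nra.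
have e3 : (lam * al i 0) ^+ 2 <= (N * Num.sqrt lam) ^+ 2.
  rewrite !exprMn (sqr_sqrtr (ltW hl)) [_ * lam]mulrC expr2 -mulrA.
  apply: (ler_wpM2l (ltW hl)).
  apply: le_trans (_ : lam * S <= _); first exact: (ler_wpM2l (ltW hl)).
  by apply: le_trans e1 e2.
rewrite -sqrtr_sqr -[N * _](ger0_norm (mulr_ge0 (ltW hN) (sqrtr_ge0 _))) -sqrtr_sqr.
exact: ler_wsqrtr.
Qed.

Lemma addE m n (A B : 'M[R]_(m, n)) i j : (A + B) i j = A i j + B i j.
Proof. by rewrite mxE. Qed.

Lemma Qmin n (G : 'M[R]_n) (kr v : 'rV[R]_n) :
  G \in unitmx -> G^T = G -> (forall w : 'rV_n, 0 <= (w *m G *m w^T) 0 0) ->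
  -(2) * ((kr *m invmx G) *m kr^T) 0 0 + ((kr *m invmx G) *m G *m (kr *m invmx G)^T) 0 0
  <= -(2) * (v *m kr^T) 0 0 + (v *m G *m v^T) 0 0.
Proof.
move=> hu hGT hpsd.
set u0 := kr *m invmx G.
have hu0 : u0 *m G = kr by rewrite /u0 mulmxKV.
suff H : forall w : 'rV_n, -(2) * (u0 *m kr^T) 0 0 + (u0 *m G *m u0^T) 0 0
  <= -(2) * ((u0 + w) *m kr^T) 0 0 + ((u0 + w) *m G *m (u0 + w)^T) 0 0.
  by have := H (v - u0); rewrite [u0 + _]addrC subrK.
move=> w.
have e1 : (u0 *m G *m w^T) 0 0 = (w *m kr^T) 0 0.
  by rewrite hu0 -[w *m _]trmxK trmx_mul trmxK [RHS]mxE.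
have e2 : (w *m G *m u0^T) 0 0 = (w *m kr^T) 0 0.
  have h : G *m u0^T = kr^T by rewrite -{1}hGT -trmx_mul hu0.
  by rewrite -mulmxA h.
have := hpsd w.
rewrite linearD /= !mulmxDl !mulmxDr !addE e1 e2.
lra.
Qed.

Definition zf n (x : T) (X : 'I_n -> T) : 'I_(1 + n) -> T := catf (fun _ : 'I_1 => x) X.
Definition cf n (u : 'rV[R]_n) : 'I_(1 + n) -> R := catf (fun _ : 'I_1 => 1) (fun j => - u 0 j).

Lemma lin_cat n x (X : 'I_n -> T) (u : 'rV[R]_n) (f : T -> R) :
  f x - \sum_j u 0 j * f (X j) = \sum_l cf u l * f (zf x X l).
Proof.
rewrite /cf /zf big_split_ord big_ord1 /= !catf_l mul1r; congr (_ + _).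
rewrite -sumrN; apply: eq_bigr => j _; by rewrite !catf_r mulNr.
Qed.

Lemma zf_inj n x (X : 'I_n -> T) : injective X -> (forall i, x != X i) -> injective (zf x X).
Proof.
move=> inj hx i j; rewrite /zf /catf => h.
rewrite -(splitK i) -(splitK j); move: h.
case: (split i) => [a|a]; case: (split j) => [b|b] //= h.
- by rewrite (ord1 a) (ord1 b).
- by move: (hx b); rewrite h eqxx.
- by move: (hx a); rewrite h eqxx.
- by rewrite (inj _ _ h).
Qed.

Lemma zf_Omega (Omega : set T) n x (X : 'I_n -> T) :
  Omega x -> (forall i, Omega (X i)) -> forall l, Omega (zf x X l).
Proof. by move=> hx hX l; rewrite /zf /catf; case: split. Qed.

Lemma cf_sq n (u : 'rV[R]_n) : 1 <= \sum_l cf u l ^+ 2.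
Proof.
rewrite /cf big_split_ord big_ord1 /= catf_l expr1n lerDl.
by apply: sumr_ge0 => j _; apply: sqr_ge0.
Qed.

Lemma cf_nz n (u : 'rV[R]_n) : exists l, cf u l != 0.
Proof. by exists (lshift n ord0); rewrite /cf catf_l oner_neq0. Qed.

Lemma qform_zf (Omega : set T) k n x (X : 'I_n -> T) (u : 'rV[R]_n) :
  (forall x y, Omega x -> Omega y -> k x y = k y x) ->
  Omega x -> (forall i, Omega (X i)) ->
  qform k (zf x X) (cf u) =
  k x x + (-(2) * (u *m (\row_j k x (X j))^T) 0 0 + (u *m gram k X *m u^T) 0 0).
Proof.
move=> hs hx hX; rewrite /zf /cf qform_cat.
rewrite (cross_sym (fun j => - u 0 j) (fun _ : 'I_1 => 1) hs) //.
rewrite qf_row.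
have -> : (fun j => - u 0 j) = (fun j => (-1) * u 0 j) by apply: funext => j; rewrite mulN1r.
rewrite qformZ sqrrN expr1n mul1r /qform /cross big_ord1 big_ord1 mul1r.
have -> : (u *m (\row_j k x (X j))^T) 0 0 = \sum_j u 0 j * k x (X j).
  by rewrite mxE; apply: eq_bigr => j _; rewrite !mxE.
have -> : \sum_(i < n) \sum_(j < 1) -1 * u 0 i * 1 * k (X i) x = - \sum_j u 0 j * k x (X j).
  rewrite -sumrN; apply: eq_bigr => i _; rewrite big_ord1 (hs _ _ (hX i) hx); ring.
ring.
Qed.

Lemma part2 Omega K lam n (X : 'I_n -> T) x :
  spd_kernel Omega K -> 0 < lam -> (forall i, Omega (X i)) -> injective X ->
  Omega x -> (forall i, x != X i) ->
  [/\ (P_n K Omega X 0 x <= P_n K Omega X lam x)%E,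
      (P_n K Omega X lam x <= Q_n K Omega X lam x)%E &
      ((Num.sqrt lam)%:E <= Q_n K Omega X lam x)%E].
Proof.
move=> HK hl hX inj hx hxX.
have hz := zf_Omega hx hX.
have zinj := zf_inj inj hxX.
have hs := HK.1.
have hp := spd_psd HK.
have qpos u : 0 < qform K (zf x X) (cf u) by apply: HK.2 => //; apply: cf_nz.
have hsl : forall a b, Omega a -> Omega b -> Klam K lam a b = Klam K lam b a.
  by move=> a b ha hb; rewrite /Klam hs // eq_sym.
have hpl := Klam_psd HK (ltW hl).
have qlam u : qform (Klam K lam) (zf x X) (cf u) =
    qform K (zf x X) (cf u) + lam * \sum_l cf u l ^+ 2 by apply: qform_Klam_inj.
have qlpos u : 0 < qform (Klam K lam) (zf x X) (cf u).
  rewrite qlam; apply: ltr_wpDr (qpos u); apply: mulr_ge0 (ltW hl) _.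
  by apply: sumr_ge0 => l _; apply: sqr_ge0.
have Pex mu : P_n K Omega X mu x =
    (Num.sqrt (qform K (zf x X) (cf (uvec K (gram K X + mu%:M) X x))))%:E.
  apply: power_exact => // f; rewrite /s_n kinterp_eq; exact: lin_cat.
set ul := uvec K (gram K X + lam%:M) X x.
have Qex : Q_n K Omega X lam x =
    (Num.sqrt (qform (Klam K lam) (zf x X) (cf ul)))%:E.
  apply: power_exact => // f; rewrite /I_n kinterp_eq.
  have -> : uvec (Klam K lam) (gram K X + lam%:M) X x = ul.
    rewrite /ul /uvec; congr (_ *m _); apply/matrixP => a b; rewrite !mxE /Klam.
    by rewrite (negbTE (hxX b)) addr0.
  exact: lin_cat.
rewrite Qex !Pex !lee_fin; split.
- apply: ler_wsqrtr; rewrite !(@qform_zf Omega K n x X _ hs hx hX) lerD2l /uvec.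
  have e0 : gram K X + 0%:M = gram K X by rewrite raddf0 addr0.
  rewrite e0; apply: Qmin.
  + by have := gram_unit HK hX inj (lexx 0); rewrite e0.
  + by apply/matrixP => a b; rewrite !mxE hs.
  + by move=> w; rewrite qf_row; apply: hp.
- apply: ler_wsqrtr; rewrite qlam lerDl; apply: mulr_ge0 (ltW hl) _.
  by apply: sumr_ge0 => l _; apply: sqr_ge0.
- apply: ler_wsqrtr; rewrite qlam -[lam]add0r; apply: lerD; first exact: hp.
  by have := ler_wpM2l (ltW hl) (cf_sq ul); rewrite mulr1 add0r.
Qed.

End S.

Unset Implicit Arguments.

Theorem proposition3p2 (R : realType) (d : nat) (Omega : set 'rV[R]_d)
  (K : 'rV[R]_d -> 'rV[R]_d -> R) (lam : R) (n : nat) (X : 'I_n -> 'rV[R]_d) :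
  spd_kernel Omega K -> 0 < lam ->
  (forall i, Omega (X i)) -> injective X ->
  [/\ (forall i, (P_n K Omega X lam (X i) <= (Num.sqrt lam)%:E)%E),
      (forall x, Omega x -> (forall i, x != X i) ->
         (P_n K Omega X 0 x <= P_n K Omega X lam x)%E /\
         (P_n K Omega X lam x <= Q_n K Omega X lam x)%E) &
      ((exists x, Omega x /\ forall i, x != X i) ->
         (ereal_sup (P_n K Omega X lam @` Omega)
          <= ereal_sup (Q_n K Omega X lam @` Omega))%E)].
Proof.
move=> HK hl hX inj; split.
- exact: part1.
- by move=> x hx hxX; have [h1 h2 _] := part2 HK hl hX inj hx hxX.
move=> [x0 [hx0 hx0X]]; apply: ge_ereal_sup => _ [y hy <-].
case: (boolP [exists i, y == X i]) => [/existsP [i /eqP ->]|/existsPn hyX].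
  apply: le_trans (part1 HK hl hX inj i) _.
  have [_ _ h3] := part2 HK hl hX inj hx0 hx0X.
  apply: le_trans h3 _; apply: ereal_sup_ubound; by exists x0.
have [_ h2 _] := part2 HK hl hX inj hy hyX.
apply: le_trans h2 _; apply: ereal_sup_ubound; by exists y.
Qed.
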